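(* Let $G=(V,E)$ be a finite graph with special vertex $i$, symmetric edge weights $w_E$ (with $w_E(u,v)=0$ for $uv\notin E$) and vertex weights $w_V$ (nonnegative, not identically zero), such that $G$ and $G-i$ are each positively connected. Let $f_i$ be a solution of $$\min_{\|g\|_w=1,\ g(i)=0}\ \sum_{jk\in E} w_E(j,k)\,(g(k)-g(j))^2,$$ positive on $V\setminus\{i\}$. Fix vertices $j,k$ with $jk\in E$ such that $G-j$ is not connected and $i$ and $k$ lie in different components of $G-j$, and suppose $w_V(k)>0$. Then $j$ is the unique vertex $z\in N(k)$ satisfying $f_i(z)=\min_{z'\in N(k)}f_i(z')$.
   Context: $\|g\|_w=\sqrt{\sum_{u\in V}w_V(u)g(u)^2}$; each edge is counted once. A weighted graph is positively connected if any two vertices are joined by a path of positive-weight edges; $G-x$ is $G$ with vertex $x$ deleted. Edges of weight zero are regarded as deleted, so neighborhoods $N(u)$, the edge $jk$, and connectivity refer to positive-weight edges. *)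

(* Defs.v *)
From mathcomp Require Import all_boot all_order all_algebra.
From mathcomp Require Import reals.
Set Implicit Arguments. Unset Strict Implicit. Unset Printing Implicit Defensive.
Import Order.TTheory GRing.Theory Num.Theory.
Local Open Scope ring_scope.

Section Defs.
Variables (R : realType) (V : finType).

Definition pos_edge_in (wE : V -> V -> R) (S : {set V}) : rel V :=
  fun x y => [&& x \in S, y \in S & 0 < wE x y].

Definition pos_connected_on (wE : V -> V -> R) (S : {set V}) : Prop :=
  forall x y, x \in S -> y \in S -> connect (pos_edge_in wE S) x y.

Definition nbhd (wE : V -> V -> R) (u : V) : {set V} := [set z | 0 < wE u z].

Definition wnorm (wV : V -> R) (g : V -> R) : R :=
  Num.sqrt (\sum_(u : V) wV u * g u ^+ 2).

(* Dirichlet energy, each (unordered) edge counted once: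
   with wE symmetric and wE x x = 0, this is half of the ordered double sum *)
Definition energy (wE : V -> V -> R) (g : V -> R) : R :=
  2^-1 * \sum_(x : V) \sum_(y : V) wE x y * (g y - g x) ^+ 2.

Definition is_minimizer (wE : V -> V -> R) (wV : V -> R) (i : V) (f : V -> R) : Prop :=
  [/\ wnorm wV f = 1, f i = 0 &
      forall g : V -> R, wnorm wV g = 1 -> g i = 0 -> energy wE f <= energy wE g].
End Defs.

(* Main.v *)
Require Import Defs.
From mathcomp Require Import all_boot all_order all_algebra.
From mathcomp Require Import reals ring lra.
Import Order.TTheory GRing.Theory Num.Theory.
Local Open Scope ring_scope.

Lemma connect_prop (T : finType) (e : rel T) (P : T -> Prop) :
  (forall x y, e x y -> P x -> P y) -> forall x y, connect e x y -> P x -> P y.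
Proof.
move=> He x y /connectP [p]; elim: p x => [|z p IH] x /=; first by move=> _ ->.
by move=> /andP[exz pz] ly Px; exact: (IH z pz ly (He _ _ exz Px)).
Qed.

Section Aux.
Variable R : realType.

Lemma quad0 (a b : R) : (forall t, 0 <= a * t + b * t ^+ 2) -> a = 0.
Proof.
move=> H; set n := `|b|.
have n0 : 0 <= n by apply: normr_ge0.
have hb : b <= n by apply: ler_norm.
have d0 : n + 1 != 0 by rewrite gt_eqF // ltr_wpDl.
set t := - a / (n + 1).
have htd : t * (n + 1) = - a by rewrite /t mulrVK // unitfE.
have ht : a * t + b * t ^+ 2 = t ^+ 2 * (b - n - 1).
  have -> : a = - (t * (n + 1)) by rewrite htd opprK.
  ring.
have := H t; rewrite ht => H2.
have t2 : t ^+ 2 <= 0.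
  have : t ^+ 2 * (b - n - 1) <= t ^+ 2 * (- 1).
    by rewrite ler_wpM2l ?sqr_ge0 //; lra.
  lra.
have : t ^+ 2 = 0 by apply/eqP; rewrite eq_le t2 sqr_ge0.
move/eqP; rewrite expf_eq0 /= => /eqP t0.
by move: htd; rewrite t0 mul0r => /eqP; rewrite eq_sym oppr_eq0 => /eqP.
Qed.

Lemma sum3 (I : finType) (F G H : I -> R) a b :
  \sum_i (F i + a * G i + b * H i) = \sum_i F i + a * \sum_i G i + b * \sum_i H i.
Proof. by rewrite !big_split /= -!mulr_sumr. Qed.

Lemma sum_delta (I : finType) (F : I -> R) u :
  \sum_y F y * (y == u)%:R = F u.
Proof.
rewrite (bigD1 u) //= eqxx mulr1 big1 ?addr0 // => y /negbTE ->.
by rewrite mulr0.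
Qed.
End Aux.

Section Main.
Variables (R : realType) (V : finType) (wE : V -> V -> R) (wV : V -> R) (i : V) (f : V -> R).
Hypotheses (wsym : forall x y, wE x y = wE y x) (wge0 : forall x y, 0 <= wE x y)
  (wVge0 : forall u, 0 <= wV u) (fmin : is_minimizer wE wV i f).

Definition NN (g : V -> R) := \sum_u wV u * g u ^+ 2.
Definition BB (h : V -> R) := \sum_x \sum_y wE x y * ((f y - f x) * (h y - h x)).

Lemma NN_ge0 g : 0 <= NN g.
Proof. by apply: sumr_ge0 => u _; rewrite mulr_ge0 ?sqr_ge0. Qed.

Lemma energy_ge0 g : 0 <= energy wE g.
Proof.
rewrite /energy mulr_ge0 ?invr_ge0 ?ler0n //.
by apply: sumr_ge0 => x _; apply: sumr_ge0 => y _; rewrite mulr_ge0 ?sqr_ge0.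
Qed.

Lemma Nf : NN f = 1.
Proof.
case: fmin; rewrite /wnorm => h _ _.
by rewrite -(sqr_sqrtr (NN_ge0 f)) /NN h expr1n.
Qed.

Lemma fi0 : f i = 0.
Proof. by case: fmin. Qed.

Lemma factA g : g i = 0 -> energy wE f * NN g <= energy wE g.
Proof.
move=> gi; have N0 := NN_ge0 g.
case: (eqVneq (NN g) 0) => [->|Nn0]; first by rewrite mulr0 energy_ge0.
set s := Num.sqrt (NN g).
have s0 : 0 < s by rewrite sqrtr_gt0 lt_def Nn0 N0.
have s2 : 0 < s ^+ 2 by rewrite exprn_gt0.
set g' := fun u => g u / s.
have hn : wnorm wV g' = 1.
  rewrite /wnorm.
  have -> : \sum_u wV u * g' u ^+ 2 = NN g / s ^+ 2.
    by rewrite /NN mulr_suml; apply: eq_bigr => u _; rewrite /g' expr_div_n mulrA.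
  by rewrite sqr_sqrtr // divff // sqrtr1.
have he : energy wE g' = energy wE g / s ^+ 2.
  rewrite /energy -mulrA mulr_suml; congr (_ * _); apply: eq_bigr => x _.
  rewrite mulr_suml; apply: eq_bigr => y _.
  by rewrite /g' -mulrBl expr_div_n mulrA.
have gi' : g' i = 0 by rewrite /g' gi mul0r.
case: fmin => _ _ /(_ g' hn gi').
by rewrite he ler_pdivlMr // sqr_sqrtr.
Qed.

Lemma expandE (h : V -> R) t :
  energy wE (fun u => f u + t * h u) = energy wE f + t * BB h + t ^+ 2 * energy wE h.
Proof.
rewrite /energy /BB.
have inner : forall x, \sum_y wE x y * ((f y + t * h y) - (f x + t * h x)) ^+ 2 =
   \sum_y wE x y * (f y - f x) ^+ 2 + (2 * t) * \sum_y wE x y * ((f y - f x) * (h y - h x))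
   + t ^+ 2 * \sum_y wE x y * (h y - h x) ^+ 2.
  by move=> x; rewrite -sum3; apply: eq_bigr => y _; ring.
rewrite (eq_bigr _ (fun x _ => inner x)) sum3.
by field; rewrite ?pnatr_eq0.
Qed.

Lemma expandN (h : V -> R) t :
  NN (fun u => f u + t * h u) = NN f + t * (2 * \sum_u wV u * (f u * h u)) + t ^+ 2 * NN h.
Proof.
rewrite /NN (mulrA t 2) -sum3; apply: eq_bigr => u _; ring.
Qed.

Lemma EL_gen h : h i = 0 ->
  BB h = 2 * energy wE f * \sum_u wV u * (f u * h u).
Proof.
move=> hi.
set a := BB h - 2 * energy wE f * \sum_u wV u * (f u * h u).
set b := energy wE h - energy wE f * NN h.
suff : a = 0 by move/eqP; rewrite subr_eq0 => /eqP.
apply: (@quad0 _ a b) => t.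
have gi : f i + t * h i = 0 by rewrite fi0 hi mulr0 addr0.
have := factA (fun u => f u + t * h u) gi; rewrite -subr_ge0 expandE expandN Nf.
suff -> : a * t + b * t ^+ 2 = energy wE f + t * BB h + t ^+ 2 * energy wE h -
  energy wE f * (1 + t * (2 * \sum_u wV u * (f u * h u)) + t ^+ 2 * NN h) by [].
rewrite /a /b; ring.
Qed.


Lemma EL u : u != i ->
  \sum_y wE u y * (f u - f y) = energy wE f * wV u * f u.
Proof.
move=> ui.
set h := fun v : V => (v == u)%:R : R.
have hi : h i = 0 by rewrite /h eq_sym (negbTE ui).
have := EL_gen h hi.
have -> : \sum_u0 wV u0 * (f u0 * h u0) = wV u * f u.
  rewrite -[RHS](@sum_delta _ _ (fun v => wV v * f v)).
  by apply: eq_bigr => v _; rewrite mulrA.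
have inner : forall x, \sum_y wE x y * ((f y - f x) * (h y - h x)) =
   wE x u * (f u - f x) - h x * \sum_y wE x y * (f y - f x).
  move=> x; rewrite mulr_sumr -(@sum_delta _ _ (fun y => wE x y * (f y - f x))) -sumrB.
  by apply: eq_bigr => y _; rewrite /h; ring.
rewrite /BB (eq_bigr _ (fun x _ => inner x)) sumrB.
have -> : \sum_x h x * \sum_y wE x y * (f y - f x) = \sum_y wE u y * (f y - f u).
  rewrite -(@sum_delta _ _ (fun x => \sum_y wE x y * (f y - f x))).
  by apply: eq_bigr => x _; rewrite mulrC.
have -> : \sum_x wE x u * (f u - f x) = \sum_y wE u y * (f u - f y).
  by apply: eq_bigr => x _; rewrite wsym.
have -> : \sum_y wE u y * (f y - f u) = - \sum_y wE u y * (f u - f y).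
  by rewrite -sumrN; apply: eq_bigr => y _; ring.
move=> H.
have : 2 * (\sum_y wE u y * (f u - f y)) = 2 * (energy wE f * wV u * f u).
  rewrite (_ : 2 * (energy wE f * wV u * f u) = 2 * energy wE f * (wV u * f u)); last by ring.
  by rewrite -H; ring.
by move/(mulfI (x:=2)); apply; rewrite pnatr_eq0.
Qed.

Lemma lam_gt0 : pos_connected_on wE [set: V] -> 0 < energy wE f.
Proof.
move=> conG; rewrite lt_def energy_ge0 andbT; apply/negP => /eqP E0.
have S0 : \sum_x \sum_y wE x y * (f y - f x) ^+ 2 = 0.
  by move: E0; rewrite /energy => /eqP; rewrite mulf_eq0 invr_eq0 pnatr_eq0 /= => /eqP.
have edge0 : forall x y, 0 < wE x y -> f y = f x.
  move=> x y wxy.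
  have Sx := psumr_eq0P (fun x _ => sumr_ge0 _ (fun y _ => mulr_ge0 (wge0 x y) (sqr_ge0 (f y - f x)))) S0 (i:=x) isT.
  have := psumr_eq0P (fun y _ => mulr_ge0 (wge0 x y) (sqr_ge0 (f y - f x))) Sx (i:=y) isT.
  move/eqP; rewrite mulf_eq0 gt_eqF //= expf_eq0 /= subr_eq0 => /eqP //.
have fz : forall x, f x = 0.
  move=> x; have := conG i x (in_setT _) (in_setT _).
  move/(@connect_prop _ _ (fun v => f v = 0)); apply; last exact: fi0.
  by move=> a b /and3P[_ _ wab] fa; rewrite (edge0 _ _ wab).
have := Nf; rewrite /NN big1 => [/eqP|v _]; first by rewrite eq_sym oner_eq0.
by rewrite fz expr0n mulr0.
Qed.

End Main.

Theorem corollary11 (R : realType) (V : finType)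
  (wE : V -> V -> R) (wV : V -> R) (i : V) (f : V -> R) (j k : V) :
  (forall x y, wE x y = wE y x) ->
  (forall x y, 0 <= wE x y) ->
  (forall x, wE x x = 0) ->
  (forall u, 0 <= wV u) ->
  (exists u, wV u != 0) ->
  pos_connected_on wE [set: V] ->
  pos_connected_on wE [set~ i] ->
  is_minimizer wE wV i f ->
  (forall u, u != i -> 0 < f u) ->
  0 < wE j k ->
  ~ pos_connected_on wE [set~ j] ->
  i != j -> k != j ->
  ~ connect (pos_edge_in wE [set~ j]) i k ->
  0 < wV k ->
  forall z, z \in nbhd wE k ->
    ((forall z', z' \in nbhd wE k -> f z <= f z') <-> z = j).
Proof.
move=> wsym wge0 _ wVge0 _ conG _ fmin fpos wjk _ ij kj nik wVk z zN.
have lam0 := @lam_gt0 R V wE wV i f wge0 wVge0 fmin conG.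
have EL0 := @EL R V wE wV i f wsym wge0 wVge0 fmin.
set e := pos_edge_in wE [set~ j].
have esym : symmetric e.
  by move=> x y; rewrite /e /pos_edge_in wsym; case: (x \in _); case: (y \in _).
have csym := sym_connect_sym esym.
pose D u := (u != j) && connect e k u.
have Dk : D k by rewrite /D kj connect0.
have Dne u : D u -> u != i.
  move=> /andP[_ cku]; apply/eqP => ui; rewrite ui in cku.
  by apply: nik; rewrite csym.
have Dnb u y : D u -> 0 < wE u y -> (y == j) || D y.
  move=> /andP[uj cku] wuy; case: (eqVneq y j) => [->|yj]; first by rewrite ?eqxx.
  rewrite /D yj /=; apply: connect_trans cku (connect1 _).
  by rewrite /e /pos_edge_in !in_setC1 uj yj wuy.
pose A := [pred u | (u == j) || D u].
have Aj : j \in A.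
  by rewrite inE eqxx.
case: (arg_minP f Aj) => u0 Au0 umin.
have local u : D u -> f u = f u0 -> (forall y, 0 < wE u y -> f y = f u0) /\ wV u = 0.
  move=> Du fu.
  have := EL0 u (Dne u Du).
  have tle : forall y, wE u y * (f u - f y) <= 0.
    move=> y; have := wge0 u y; rewrite le0r => /orP[/eqP->|wp]; first by rewrite mul0r.
    apply: mulr_ge0_le0; first exact: ltW.
    rewrite subr_le0 fu umin //.
    exact: (Dnb u y Du wp).
  have Sle : \sum_y wE u y * (f u - f y) <= 0.
    by rewrite -oppr_ge0 -sumrN; apply: sumr_ge0 => y _; rewrite oppr_ge0 tle.
  have Rge : 0 <= energy wE f * wV u * f u.
    apply: mulr_ge0; [apply: mulr_ge0; [exact: ltW | exact: wVge0] | exact: ltW (fpos u (Dne u Du))].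
  move=> H.
  have S0 : \sum_y wE u y * (f u - f y) = 0 by apply/eqP; rewrite eq_le Sle H Rge.
  split.
    move=> y wp.
    have S0' : \sum_y0 - (wE u y0 * (f u - f y0)) = 0 by rewrite sumrN S0 oppr0.
    have hnn : forall y0, true -> 0 <= - (wE u y0 * (f u - f y0)).
      by move=> y0 _; rewrite oppr_ge0 tle.
    have := psumr_eq0P hnn S0' (i:=y) isT.
    move/eqP; rewrite oppr_eq0 mulf_eq0 (gt_eqF wp) /= subr_eq0 => /eqP fuy.
    by rewrite -fuy fu.
  have : energy wE f * wV u * f u = 0 by rewrite -H S0.
  move/eqP; rewrite -mulrA mulf_eq0 (gt_eqF lam0) /= mulf_eq0 (gt_eqF (fpos u (Dne u Du))) /= orbF.
  by move/eqP.
have noteq u : D u -> f u0 < f u.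
  move=> Du; rewrite lt_def umin ?andbT; last by apply/orP; right.
  apply/eqP => fu.
  have cuk : connect e u k by rewrite csym; case/andP: Du.
  have step : forall x y, e x y -> D x /\ f x = f u0 -> D y /\ f y = f u0.
    move=> x y exy [Dx fx].
    have wxy : 0 < wE x y by case/and3P: exy.
    have yj : y != j by case/and3P: exy => _; rewrite in_setC1.
    split; last exact: (local x Dx fx).1 y wxy.
    rewrite /D yj /=; case/andP: Dx => _ ckx; exact: connect_trans ckx (connect1 exy).
  have [_ fk] := @connect_prop _ e (fun v => D v /\ f v = f u0) step u k cuk (conj Du fu).
  have := (local k Dk fk).2.
  by move=> h; move: wVk; rewrite h ltxx.
have u0j : u0 = j.
  move: Au0 => /orP[/eqP //|Du0].
  by have := noteq u0 Du0; rewrite ltxx.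
have jN : 0 < wE k j by rewrite wsym.
move: zN; rewrite /nbhd inE => zN.
split.
  move=> H; case/orP: (Dnb k z Dk zN) => [/eqP //|Dz].
  have hlt := noteq z Dz; rewrite u0j in hlt.
  have jn : j \in nbhd wE k by rewrite /nbhd inE.
  have := H j jn.
  by rewrite leNgt hlt.
move=> zj z'; rewrite /nbhd inE => z'N; rewrite zj.
case/orP: (Dnb k z' Dk z'N) => [/eqP -> //|Dz'].
rewrite -u0j; exact: ltW (noteq z' Dz').
Qed.
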